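(* Let $\mathbf v,\mathbf w,\mathbf k,\boldsymbol\ell$ be $m$-tuples of positive integers with $k_i\ge2$ for all $i$, $\mathbf k\le\mathbf w\le\mathbf v$ and $\mathbf k\le\boldsymbol\ell\le\mathbf v$ (entrywise). Then $C(\mathbf v,\mathbf k,2)\ge C(\mathbf w,\mathbf k,2)$ and $C(\mathbf v,\mathbf k,2)\ge C(\mathbf v,\boldsymbol\ell,2)$.
   Context: For $m$-tuples $\mathbf a,\mathbf b$ of positive integers with $\mathbf b\le\mathbf a$ entrywise: let $X_1,\dots,X_m$ be pairwise disjoint sets with $|X_i|=a_i$; a block is an $m$-tuple $(B_1,\dots,B_m)$ with $B_i\subseteq X_i$, $|B_i|=b_i$; an $m$-tuple of sets $(T_1,\dots,T_m)$ is $(\mathbf a,\mathbf b,2)$-admissible if $T_i\subseteq X_i$, $|T_i|\le b_i$ and $\sum|T_i|=2$, and is contained in a block if $T_i\subseteq B_i$ for all $i$. A ${\rm GC}(\mathbf a,\mathbf b,2)$ is a finite family (repetitions allowed) of blocks containing every admissible tuple in at least one block; $C(\mathbf a,\mathbf b,2)$ is the minimum number of blocks. *)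

(* Defs.v *)
From mathcomp Require Import all_boot.
Set Implicit Arguments. Unset Strict Implicit. Unset Printing Implicit Defensive.

(* The ground set is the disjoint union of X_i := 'I_(a i), realized as the
   finite type of dependent pairs (i, x) with x : 'I_(a i).
   An m-tuple of sets (T_1,...,T_m) with T_i ⊆ X_i is the same thing as a
   subset of this disjoint union; its i-th component is [set x in T | tag x == i]. *)
Definition point (m : nat) (a : 'I_m -> nat) : finType := {i : 'I_m & 'I_(a i)}.

Definition part (m : nat) (a : 'I_m -> nat) (T : {set point a}) (i : 'I_m) :
  {set point a} := [set x in T | tag x == i].

Definition is_block (m : nat) (a b : 'I_m -> nat) (B : {set point a}) : bool :=
  [forall i, #|part B i| == b i].

Definition admissible (m : nat) (a b : 'I_m -> nat) (T : {set point a}) : bool :=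
  [forall i, #|part T i| <= b i] && (\sum_(i < m) #|part T i| == 2).

Definition is_GC (m : nat) (a b : 'I_m -> nat) (F : seq {set point a}) : Prop :=
  all (is_block b) F /\
  forall T : {set point a}, admissible b T -> exists2 B, B \in F & T \subset B.

Definition is_C (m : nat) (a b : 'I_m -> nat) (c : nat) : Prop :=
  (exists F : seq {set point a}, is_GC b F /\ size F = c) /\
  (forall F : seq {set point a}, is_GC b F -> c <= size F).

Arguments is_block {m} a b B.
Arguments admissible {m} a b T.
Arguments is_GC {m} a b F.
Arguments is_C {m} a b c.

(* Main.v *)
Require Import Defs.
From mathcomp Require Import all_boot.

Lemma subset_ext (T : finType) (U : {set T}) d (S : {set T}) :
  S \subset U -> #|S| + d <= #|U| ->
  exists B : {set T}, [&& S \subset B, B \subset U & #|B| == #|S| + d].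
Proof.
elim: d S => [|d IH] S sSU hc.
  by exists S; rewrite subxx sSU addn0 eqxx.
have: S \proper U by rewrite properEcard sSU; apply: leq_trans hc; rewrite -addSnnS leq_addr.
case/properP=> _ [x xU xS].
have h0 : x |: S \subset U by rewrite subUset sub1set xU sSU.
have h4 : #|x |: S| + d <= #|U| by rewrite cardsU1 xS add1n addSnnS.
have [B /and3P [h1 h2 h3]] := IH (x |: S) h0 h4.
exists B; apply/and3P; split => //.
- by apply: subset_trans h1; apply: subsetUr.
- by rewrite (eqP h3) cardsU1 xS add1n addSnnS.
Qed.

Lemma block_ext (m : nat) (a b : 'I_m -> nat) (S : {set point a}) :
  (forall i, #|part S i| <= b i) -> (forall i, b i <= a i) ->
  exists B, is_block a b B && (S \subset B).
Proof.
move=> hS hb.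
pose U i := [set x : point a | tag x == i].
have hU i : a i <= #|U i|.
  have -> : U i = [set (Tagged (fun j => 'I_(a j)) y) | y : 'I_(a i)].
    apply/setP => x; rewrite !inE; apply/idP/idP.
      case: x => j y /= /eqP e; subst j; apply/imsetP; exists y => //.
    by case/imsetP => y _ ->.
  rewrite card_imset ?card_ord // => y1 y2 /eqP; rewrite -tag_eqE /tag_eq /= eqxx /=.
  by rewrite tagged_asE => /eqP.
have ex i : exists B : {set point a}, [&& part S i \subset B, B \subset U i & #|B| == b i].
  have := @subset_ext _ (U i) (b i - #|part S i|) (part S i).
  rewrite subnKC ?hS //; apply.
  - by apply/subsetP => x; rewrite !inE => /andP [].
  - exact: leq_trans (hb i) (hU i).
pose f i := odflt set0 [pick B : {set point a} | [&& part S i \subset B, B \subset U i & #|B| == b i]].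
have hf i : [&& part S i \subset f i, f i \subset U i & #|f i| == b i].
  rewrite /f; case: pickP => [B -> //|H].
  by case: (ex i) => B; rewrite H.
exists [set x | x \in f (tag x)]; apply/andP; split.
- apply/forallP => i; have /and3P [_ h2 h3] := hf i.
  suff -> : part [set x | x \in f (tag x)] i = f i by [].
  apply/setP => x; rewrite !inE; apply/andP/idP => [[h /eqP e]|h].
    by rewrite -e.
  by have := subsetP h2 x h; rewrite inE => /eqP e; rewrite e h.
- apply/subsetP => x xS; rewrite inE.
  have /and3P [h1 _ _] := hf (tag x).
  by apply: (subsetP h1); rewrite !inE xS eqxx.
Qed.

Section Emb.
Variables (m : nat) (w v : 'I_m -> nat).
Hypothesis hw : forall i, w i <= v i.

Definition emb (x : point w) : point v :=
  Tagged (fun i => 'I_(v i)) (widen_ord (hw (tag x)) (tagged x)).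

Lemma emb_inj : injective emb.
Proof.
case=> i y [j z] /eqP; rewrite /emb -tag_eqE /tag_eq /=.
case/andP => /eqP e; subst j; rewrite tagged_asE => /eqP h.
by congr existT; apply: val_inj; have := congr1 val h.
Qed.

Lemma part_emb (T : {set point w}) i : part (emb @: T) i = emb @: part T i.
Proof.
apply/setP => x; rewrite !inE; apply/andP/imsetP.
  by case=> /imsetP [y yT ->] e; exists y => //; rewrite !inE yT.
by case=> y; rewrite !inE => /andP [yT e] ->; split => //; apply/imsetP; exists y.
Qed.

Lemma card_part_emb (T : {set point w}) i : #|part (emb @: T) i| = #|part T i|.
Proof. by rewrite part_emb card_imset //; exact: emb_inj. Qed.

Lemma card_part_pre (B : {set point v}) i : #|part (emb @^-1: B) i| <= #|part B i|.
Proof.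
rewrite -(card_imset _ emb_inj); apply: subset_leq_card.
apply/subsetP => x /imsetP [y]; rewrite !inE => /andP [yB e] ->.
by rewrite yB.
Qed.
End Emb.

Theorem theorem3p17 (m : nat) (v w k l : 'I_m -> nat) :
  (forall i, 0 < v i) -> (forall i, 0 < w i) -> (forall i, 0 < k i) -> (forall i, 0 < l i) ->
  (forall i, 2 <= k i) ->
  (forall i, k i <= w i) -> (forall i, w i <= v i) ->
  (forall i, k i <= l i) -> (forall i, l i <= v i) ->
  forall cvk cwk cvl : nat,
    is_C v k cvk -> is_C w k cwk -> is_C v l cvl ->
    cwk <= cvk /\ cvl <= cvk.
Proof.
move=> _ _ _ _ k2 kw wv kl lv cvk cwk cvl [[F [[Fb Fc] <-]] _] [_ Hw] [_ Hl].
split.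
- pose g (B : {set point v}) := odflt set0
    [pick B' : {set point w} | is_block w k B' && ((@emb _ w v wv) @^-1: B \subset B')].
  have hg B : B \in F -> is_block w k (g B) && ((@emb _ w v wv) @^-1: B \subset g B).
    move=> BF; rewrite /g; case: pickP => [B' -> //|H].
    have [|//|B'] := @block_ext m w k ((@emb _ w v wv) @^-1: B).
    + move=> i; have := forallP (allP Fb B BF) i => /eqP <-.
      exact: card_part_pre.
    by rewrite H.
  rewrite -(size_map g F); apply: Hw; split.
  + by apply/allP => B' /mapP [B BF ->]; case/andP: (hg B BF).
  + move=> T /andP [/forallP hT hs].
    have [|B BF TB] := Fc ((@emb _ w v wv) @: T).
      apply/andP; split.
        by apply/forallP => i; rewrite card_part_emb.
      by under eq_bigr => i _ do rewrite card_part_emb.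
    exists (g B); first by apply/mapP; exists B.
    case/andP: (hg B BF) => _ h; apply: subset_trans h.
    apply/subsetP => x xT; rewrite inE; apply: (subsetP TB).
    by apply/imsetP; exists x.
- pose g (B : {set point v}) := odflt set0
    [pick B' : {set point v} | is_block v l B' && (B \subset B')].
  have hg B : B \in F -> is_block v l (g B) && (B \subset g B).
    move=> BF; rewrite /g; case: pickP => [B' -> //|H].
    have [|//|B'] := @block_ext m v l B.
    + by move=> i; have := forallP (allP Fb B BF) i => /eqP ->.
    by rewrite H.
  rewrite -(size_map g F); apply: Hl; split.
  + by apply/allP => B' /mapP [B BF ->]; case/andP: (hg B BF).
  + move=> T /andP [_ hs].
    have [|B BF TB] := Fc T.
      apply/andP; split => //; apply/forallP => i.
      apply: leq_trans (k2 i); rewrite -(eqP hs) (bigD1 i) //=.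
      exact: leq_addr.
    exists (g B); first by apply/mapP; exists B.
    by case/andP: (hg B BF) => _ h; apply: subset_trans h.
Qed.
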